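(* Let $(V,C,[p_{i,c}],k)$ be an ABC instance under the Candidate-Probability model with $0<p_{i,c}<1$ for all voters $i\in V$ and all candidates $c\in C$. Then a committee $W\subseteq C$ with $|W|=k$ satisfies JR with respect to every plausible approval profile if and only if $W=C$ and $k=|C|$.
   Context: An ABC instance consists of voters $V=[n]$, candidates $C=[m]$, an approval profile $A=(A_1,\dots,A_n)$ with $A_i\subseteq C$, and a positive integer $k$. A committee is a set $W\subseteq C$ with $|W|=k$. $W$ satisfies justified representation (JR) with respect to $A$ if for every $V'\subseteq V$ with $|V'|\ge \frac{n}{k}$ and $\bigcap_{i\in V'}A_i\neq\emptyset$, there is $i\in V'$ with $A_i\cap W\neq\emptyset$. In the Candidate-Probability model each voter $i$ approves each candidate $c$ independently with probability $p_{i,c}$. A plausible approval profile is one with positive probability. *)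

(* Defs.v *)
From mathcomp Require Import all_boot all_order all_algebra.
Set Implicit Arguments. Unset Strict Implicit. Unset Printing Implicit Defensive.
Import Order.TTheory GRing.Theory Num.Theory.
Local Open Scope ring_scope.

Definition profile_prob (R : numDomainType) (n m : nat)
  (p : 'I_n -> 'I_m -> R) (A : 'I_n -> {set 'I_m}) : R :=
  \prod_(i < n) \prod_(c < m) (if c \in A i then p i c else 1 - p i c).

Definition plausible (R : numDomainType) (n m : nat)
  (p : 'I_n -> 'I_m -> R) (A : 'I_n -> {set 'I_m}) : Prop :=
  0 < profile_prob p A.

Definition JR (n m : nat) (A : 'I_n -> {set 'I_m}) (k : nat) (W : {set 'I_m}) : Prop :=
  forall V' : {set 'I_n},
    (n%:R / k%:R <= (#|V'|%:R : rat)) ->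
    (\bigcap_(i in V') A i != set0) ->
    exists2 i, i \in V' & A i :&: W != set0.

(* Main.v *)
Require Import Defs.
From mathcomp Require Import all_boot all_order all_algebra.
Import Order.TTheory GRing.Theory Num.Theory.
Local Open Scope ring_scope.

Theorem lemma2 (R : realFieldType) (n m k : nat) (p : 'I_n -> 'I_m -> R)
  (hn : (0 < n)%N) (hk : (0 < k)%N)
  (hp : forall (i : 'I_n) (c : 'I_m), 0 < p i c /\ p i c < 1)
  (W : {set 'I_m}) (hW : #|W| = k) :
  (forall A : 'I_n -> {set 'I_m}, plausible p A -> JR A k W)
  <-> (W = [set: 'I_m] /\ k = m).
Proof.
split.
- move=> H.
  have HW : W = [set: 'I_m].
    case: (pickP [pred c | c \notin W]) => [c hc|h]; last first.
      apply/setP => x; rewrite inE.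
      by have := h x => /= /negbFE.
    exfalso; move: hc => /= hc.
    have Hp : plausible p (fun _ => [set c]).
      rewrite /plausible /profile_prob; apply: prodr_gt0 => i _.
      apply: prodr_gt0 => d _; case: ifP => _; have [h1 h2] := hp i d.
        by [].
      by rewrite subr_gt0.
    have [||i _ hi] := H _ Hp [set: 'I_n].
    + rewrite cardsT card_ord ler_pdivrMr ?ltr0n // -natrM ler_nat.
      by rewrite leq_pmulr.
    + apply/set0Pn; exists c; apply/bigcapP => i _; by rewrite inE.
    + move: hi; case/set0Pn => x; rewrite !inE => /andP [/eqP -> hcW].
      by rewrite hcW in hc.
  split=> //; by rewrite -hW HW cardsT card_ord.
- move=> [HW _] A _ V' hV hcap.
  have : (0 < #|V'|)%N.
    rewrite lt0n; apply/negP => /eqP h0; move: hV; rewrite h0.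
    rewrite ler_pdivrMr ?ltr0n // mul0r lern0 => /eqP hn0.
    by move: hn; rewrite hn0.
  rewrite card_gt0 => /set0Pn [i hi].
  exists i => //.
  case/set0Pn: hcap => c /bigcapP hc.
  apply/set0Pn; exists c; rewrite inE HW inE andbT.
  exact: hc.
Qed.
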